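(* Let $\Gamma$ be a 3-colex and $E=\prod_{\nu\in\Omega}X_\nu$ an $X$-type error on the 3D color code on $\Gamma$. Suppose that for each color $c\in\{r,b,g,y\}$, $\mathsf F_c$ is a set of faces of $\Gamma^{*\setminus c}$ such that $\prod_{f\in\mathsf F_c}X_f=\pi_c(E)\,S_c$ for some $X$-stabilizer $S_c$ of the 3D toric code on $\Gamma^{*\setminus c}$ (i.e. $\pi_c(E)$ is estimated up to a stabilizer on $\Gamma^{*\setminus c}$). Then $\mathsf F=\bigcup_c\mathsf F_c$ equals $\partial(E S)$ for some $X$-stabilizer $S$ of the color code; that is, $\mathsf F$ is an estimate of $\partial E$ up to the boundary of an $X$-stabilizer of the color code.
   Context: Colors are $\{r,b,g,y\}$. A 3-colex $\Gamma$ is a 3-dimensional cell complex without boundary in which every vertex is 4-valent and lies in exactly four 3-cells, and whose 3-cells are properly 4-colored: every face lies in exactly two 3-cells, which have different colors. The dual complex $\Gamma^*$ has an $i$-cell for every $(3-i)$-cell of $\Gamma$, with incidences reversed; every 3-cell of $\Gamma^*$ is a tetrahedron. A vertex of $\Gamma^*$ is given the color of the corresponding 3-cell of $\Gamma$, so the four vertices of each tetrahedron have distinct colors. A face of $\Gamma^*$ is a $c$-face if none of its vertices has color $c$; each tetrahedron $\nu$ has a unique $c$-face $\pi_c(\nu)$. The 3D color code on $\Gamma$ has one qubit per tetrahedron of $\Gamma^*$, $X$-stabilizer generators $B^X_v=\prod_{\nu\ni v}X_\nu$ for vertices $v$ of $\Gamma^*$, and $Z$-stabilizer generators $B^Z_e=\prod_{\nu\supset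 e}Z_\nu$ for edges $e$; $X$-stabilizers are products of the $B^X_v$. The minor complex $\Gamma^{*\setminus c}$ is obtained from $\Gamma^*$ by deleting all vertices of color $c$ together with all edges and faces incident to them; its faces are the $c$-faces of $\Gamma^*$, and its 3-cells are obtained by merging, for each $c$-vertex $v$, all tetrahedra containing $v$ into one 3-cell. The 3D toric code on $\Gamma^{*\setminus c}$ has qubits on faces and $X$-stabilizer generators $\prod_{f\in\partial\mu}X_f$ for 3-cells $\mu$; its $X$-stabilizers are products of these. Operators are mapped by $\pi_c(\prod_{\nu\in\Omega}X_\nu)=\prod_{\nu\in\Omega}X_{\pi_c(\nu)}$ (with $X_f^2=I$). For an $X$-operator $E=\prod_{\nu\in\Omega}X_\nu$ on the color code, its boundary is $\partial E=\sum_{\nu\in\Omega}\partial\nu$, where $\partial\nu$ is the set of four faces of $\nu$ and the sum is the mod-2 sum (symmetric difference) of sets of faces. *)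

(* Defs.v *)
(* Combinatorial model of the dual complex Gamma^* of a 3-colex.
   Colors r,b,g,y are encoded as 'I_4 = {0,1,2,3}. *)
From mathcomp Require Import all_boot.
Set Implicit Arguments. Unset Strict Implicit. Unset Printing Implicit Defensive.

Notation color := 'I_4.

Definition sum2 (I X : finType) (A : {set I}) (G : I -> {set X}) : {set X} :=
  [set x | odd #|[set i in A | x \in G i]|].

(* product of two X-operators = symmetric difference of their supports *)
Definition symdiff (X : finType) (A B : {set X}) : {set X} := (A :|: B) :\: (A :&: B).

Section DualColex.
Variables (V T F : finType).
(* col v    : color of vertex v of Gamma^*
   tv nu c  : the (unique) vertex of color c of the tetrahedron nu
   tf nu c  : the c-face pi_c(nu) of the tetrahedron nu
   fv f     : vertex set of the face f *)
Variables (col : V -> color) (tv : T -> color -> V) (tf : T -> color -> F)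
          (fv : F -> {set V}).

Definition is_dual_colex : Prop :=
  [/\ (forall nu c, col (tv nu c) = c),
      (forall nu c, fv (tf nu c) = [set tv nu c' | c' in [set c' : color | c' != c]]) &
      (forall f, #|[set nu | [exists c, tf nu c == f]]| = 2)].

Definition tet_vert (nu : T) (v : V) : bool := [exists c, tv nu c == v].

Definition cface (c : color) (f : F) : bool := [forall v in fv f, col v != c].

Definition bnd (Om : {set T}) : {set F} := sum2 Om (fun nu => [set tf nu c | c : color]).

Definition cc_stab (W : {set V}) : {set T} := sum2 W (fun v => [set nu | tet_vert nu v]).

Definition pic (c : color) (Om : {set T}) : {set F} := sum2 Om (fun nu => [set tf nu c]).

(* boundary of the 3-cell of Gamma^{*\c} obtained by merging the tetrahedra around the c-vertex v *)
Definition toric_cell (c : color) (v : V) : {set F} := pic c [set nu | tet_vert nu v].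

Definition toric_stab (c : color) (W : {set V}) : {set F} := sum2 W (toric_cell c).
End DualColex.

(* Main.v *)
Require Import Defs.
From mathcomp Require Import all_boot.

Lemma oddcard (I : finType) (P : pred I) :
  odd #|[set i | P i]| = \big[addb/false]_(i : I) P i.
Proof.
rewrite cardsE -sum1_card (big_morph odd oddD erefl) big_mkcond /=.
by apply: eq_bigr => i _; rewrite unfold_in; case: (P i).
Qed.

Lemma in_sum2 (I X : finType) (A : {set I}) (G : I -> {set X}) x :
  (x \in sum2 A G) = \big[addb/false]_(i : I) ((i \in A) && (x \in G i)).
Proof. by rewrite /sum2 inE oddcard. Qed.

Lemma in_symdiff (X : finType) (A B : {set X}) x :
  (x \in symdiff A B) = (x \in A) (+) (x \in B).
Proof. by rewrite !inE; case: (x \in A); case: (x \in B). Qed.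

Lemma xor_andr (I : finType) (F : I -> bool) b :
  (\big[addb/false]_(i : I) F i) && b = \big[addb/false]_(i : I) (F i && b).
Proof. by elim/big_rec2: _ => // i x y _ <-; rewrite andb_addl. Qed.

Lemma xor_andl (I : finType) (F : I -> bool) b :
  \big[addb/false]_(i : I) (b && F i) = b && \big[addb/false]_(i : I) F i.
Proof. by case: b => //; rewrite big1. Qed.

Theorem theorem2 (V T F : finType) (col : V -> color) (tv : T -> color -> V)
    (tf : T -> color -> F) (fv : F -> {set V})
    (Hcolex : is_dual_colex col tv tf fv)
    (Om : {set T}) (Fc : color -> {set F}) :
  (forall c, Fc c \subset [set f | cface col fv c f]) ->
  (forall c, exists Wc : {set V},
      Wc \subset [set v | col v == c] /\
      Fc c = symdiff (pic tf c Om) (toric_stab tv tf c Wc)) ->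
  exists W : {set V}, \bigcup_(c : color) Fc c = bnd tf (symdiff Om (cc_stab tv W)).
Proof.
move=> HF HW; case: Hcolex => Hcol Hfv Hcard.
have [Wf HWf] := fin_all_exists HW.
have Wcol : forall c v, v \in Wf c -> col v = c.
  by move=> c v Hv; have := subsetP (proj1 (HWf c)) v Hv; rewrite inE => /eqP.
exists (\bigcup_c Wf c); apply/setP => f.
have : 0 < #|[set nu | [exists c, tf nu c == f]]| by rewrite Hcard.
case/card_gt0P => nu0; rewrite inE => /existsP [c0 /eqP Hnu0].
have Hin : forall c, c != c0 -> tv nu0 c \in fv f.
  by move=> c Hc; rewrite -Hnu0 Hfv; apply/imsetP; exists c; rewrite ?inE.
have K : forall nu c, tf nu c = f -> c = c0.
  move=> nu c Hc; apply/eqP; apply/negPn/negP => Hne.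
  have := Hin c Hne; rewrite -Hc Hfv => /imsetP [c' Hc' Heq].
  have := Hcol nu0 c; rewrite Heq Hcol => E; subst c'.
  by move: Hc'; rewrite inE eqxx.
have Kc : forall c, cface col fv c f -> c = c0.
  move=> c /forallP Hc; apply/eqP; apply/negPn/negP => Hne.
  by have := Hc (tv nu0 c); rewrite Hin // Hcol eqxx.
have -> : (f \in \bigcup_c Fc c) = (f \in Fc c0).
  apply/bigcupP/idP => [[c _ Hfc]|H]; last by exists c0.
  have := subsetP (HF c) f Hfc; rewrite inE => /Kc E; by subst c.
rewrite (proj2 (HWf c0)) in_symdiff /bnd in_sum2.
have E1 : forall nu, (f \in [set tf nu c | c : color]) = (tf nu c0 == f).
  move=> nu; apply/imsetP/eqP => [[c _ Hc]|<-]; last by exists c0.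
  by rewrite Hc (K nu c (esym Hc)).
under eq_bigr do rewrite E1 in_symdiff andb_addl.
rewrite big_split /=; congr addb.
  by rewrite /pic in_sum2; apply: eq_bigr => nu _; rewrite inE eq_sym.
rewrite /toric_stab in_sum2.
under [in RHS]eq_bigr do rewrite /cc_stab in_sum2 xor_andr.
rewrite [in RHS]exchange_big /=; apply: eq_bigr => v _.
rewrite /toric_cell /pic in_sum2.
under [in LHS]eq_bigr do rewrite !inE eq_sym.
under [in RHS]eq_bigr do rewrite inE -andbA.
rewrite xor_andl.
case: (eqVneq (col v) c0) => Hv /=.
  have -> : (v \in \bigcup_c Wf c) = (v \in Wf c0).
    apply/bigcupP/idP => [[c _ Hw]|Hw]; last by exists c0.
    by have E := Wcol _ _ Hw; subst c; rewrite -Hv.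
  by rewrite -xor_andl.
case: (boolP (v \in Wf c0)) => Hw /=.
  by move: Hv; rewrite -(Wcol _ _ Hw) eqxx.
case: (v \in \bigcup_c Wf c) => //=.
symmetry.
have T1 : forall nu, tet_vert tv nu v && (tf nu c0 == f) =
    (v \in fv f) && [exists c, tf nu c == f].
  move=> nu; case: (eqVneq (tf nu c0) f) => Hnu /=.
    have -> : [exists c, tf nu c == f] by apply/existsP; exists c0; rewrite Hnu.
    rewrite -Hnu Hfv /tet_vert andbT; rewrite andbT; apply/existsP/idP => [[c /eqP Hc]|].
      2: by case/imsetP => c' Hc' ->; exists c'.
      apply/imsetP; exists c => //; rewrite inE; move: Hv; by rewrite -Hc Hcol.
  rewrite andbF; symmetry; apply/andP => [[_ /existsP [c /eqP Hc]]].
  by move: Hnu; rewrite -Hc (K _ _ Hc) eqxx.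
under eq_bigr do rewrite T1.
by rewrite xor_andl -oddcard Hcard andbF.
Qed.
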